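(* Let $K$ be a field of characteristic zero, let $(p_\lambda(x_1,x_2,\ldots))_{\lambda\in\mathcal P}$ be a full sequence of symmetric functions over $K$, and let $F^{y}$ be a shift-invariant $K$-linear operator from symmetric functions in $x_1,x_2,\ldots$ to symmetric functions in $x_1,x_2,\ldots$ with coefficients polynomial in $y$, such that for every partition $\lambda$ $$F^{y}p_\lambda(x_1,x_2,\ldots)=\sum_{\alpha}p_\alpha(x_1,x_2,\ldots)\,p_{\lambda-\alpha}(y,0,0,\ldots),$$ the sum ranging over all integer vectors $\alpha$ with finite support. Then there is a nonzero constant $c\in K$ with $F^{y}=cE^{y}$; in other words, $(\frac1c p_\lambda)_{\lambda\in\mathcal P}$ is a full divided power sequence of symmetric functions.
   Context: A partition $\lambda$ is an eventually zero weakly decreasing sequence $\lambda_1\ge\lambda_2\ge\cdots$ of natural numbers; $\mathcal P$ is the set of partitions and $\mathcal P_n$ those with sum $|\lambda|=n$. The conjugate $\lambda'$ is given by $\lambda'_i=|\{j:\lambda_j\ge i\}|$. Reverse lexicographic order: $\alpha\ll\beta$ iff there is $i$ with $\alpha_i<\beta_i$ and $\alpha_j=\beta_j$ for all $j>i$. $m_\mu$ denotes the monomial symmetric function. A full sequence $(p_\lambda)_{\lambda\in\mathcal P}$ consists of symmetric functions with $p_\lambda$ homogeneous of degree $|\lambda|$ and $p_\lambda=\sum_{\mu\in\mathcal P_{|\lambda|},\ \mu=\lambda'\text{ or }\lambda'\ll\mu}b_{\lambda\mu}m_\mu$ with the coefficient $b_{\lambda\lambda'}$ of $m_{\lambda'}$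 nonzero. For an integer vector $\alpha$ with finite support: if all $\alpha_i\ge0$, $p_\alpha:=p_\lambda$ where $\lambda$ is the partition obtained by sorting $\alpha$; if some $\alpha_i<0$, $p_\alpha:=0$. The symmetric shift is $E^{a}q(x_1,x_2,\ldots)=q(a,x_1,x_2,\ldots)$ (for a scalar $a$ or an indeterminate $y$). An operator $\theta$ is shift-invariant if $E^a\theta=\theta E^a$ for all $a\in K$. A full divided power sequence is a full sequence satisfying $E^yp_\lambda(x_1,x_2,\ldots)=\sum_\alpha p_\alpha(x_1,x_2,\ldots)p_{\lambda-\alpha}(y,0,0,\ldots)$ for all $\lambda$. *)

(* Defs.v *)
(* Symmetric functions over a field K in x1,x2,... are
   represented by their coefficient function on monomials: f s is the
   coefficient of x1^(s_1) x2^(s_2) ... (trailing zeros of s allowed). *)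
From HB Require Import structures.
From mathcomp Require Import all_boot all_order all_algebra.
From Stdlib Require Import ClassicalEpsilon.
Set Implicit Arguments. Unset Strict Implicit. Unset Printing Implicit Defensive.
Import Order.TTheory GRing.Theory.
Local Open Scope ring_scope.

Definition is_part (l : seq nat) : bool := sorted geq l && all (fun i => 0 < i)%N l.

Definition shape (s : seq nat) : seq nat := sort geq [seq i <- s | (0 < i)%N].

Definition conj_part (l : seq nat) : seq nat :=
  [seq count (fun j => i <= j)%N l | i <- iota 1 (head 0%N l)].

Definition revlex (a b : seq nat) : Prop :=
  exists i, (nth 0 a i < nth 0 b i)%N /\
            forall j, (i < j)%N -> nth 0 a j = nth 0 b j.

Fixpoint vecs_le (l : seq nat) : seq (seq nat) :=
  match l with
  | [::] => [:: [::]]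
  | x :: l' => [seq i :: a | i <- iota 0 x.+1, a <- vecs_le l']
  end.

Definition vsub (l a : seq nat) : seq nat := [seq x.1 - x.2 | x <- zip l a]%N.

Section SymFun.
Variable K : fieldType.

Definition fsum (u : nat -> K) : K :=
  let N := epsilon (inhabits 0%N) (fun N => forall n, (N <= n)%N -> u n = 0) in
  \sum_(n < N) u n.

Definition is_sym (f : seq nat -> K) : Prop :=
  (forall s, f (rcons s 0%N) = f s) /\ (forall s t, perm_eq s t -> f s = f t).

Definition symfun (f : seq nat -> K) : Prop :=
  is_sym f /\ exists D, forall s, (D < sumn s)%N -> f s = 0.

(* symmetric functions in x with coefficients polynomial in y:
   g k s = coefficient of y^k x^s *)
Definition symfunY (g : nat -> seq nat -> K) : Prop :=
  (forall k, symfun (g k)) /\ exists N, forall k s, (N < k)%N -> g k s = 0.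

(* symmetric shift by an indeterminate y : q(y,x1,x2,...) *)
Definition Ey (f : seq nat -> K) : nat -> seq nat -> K := fun k s => f (k :: s).

(* symmetric shift by a scalar a : q(a,x1,x2,...) *)
Definition Ea (a : K) (f : seq nat -> K) : seq nat -> K :=
  fun s => fsum (fun j => a ^+ j * f (j :: s)).

Definition EaY (a : K) (g : nat -> seq nat -> K) : nat -> seq nat -> K :=
  fun k => Ea a (g k).

Definition full_seq (p : seq nat -> seq nat -> K) : Prop :=
  forall l, is_part l ->
    [/\ symfun (p l),
        (forall s, p l s != 0 -> sumn s = sumn l),
        (forall mu, is_part mu -> p l mu != 0 ->
            mu = conj_part l \/ revlex (conj_part l) mu)
      & p l (conj_part l) != 0].

(* right-hand side  sum_alpha p_alpha(x) p_{lambda-alpha}(y,0,0,...) :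
   coefficient of y^k x^s.  Terms with some alpha_i < 0 or
   some (lambda - alpha)_i < 0 vanish, so alpha ranges over vecs_le l. *)
Definition dp_rhs (p : seq nat -> seq nat -> K) (l : seq nat) : nat -> seq nat -> K :=
  fun k s => \sum_(a <- vecs_le l) p (shape a) s * p (shape (vsub l a)) [:: k].

Definition full_dps (p : seq nat -> seq nat -> K) : Prop :=
  full_seq p /\ forall l, is_part l -> forall k s, Ey (p l) k s = dp_rhs p l k s.

End SymFun.

(* Main.v *)
Require Import Defs.
From HB Require Import structures.
From mathcomp Require Import all_boot all_order all_algebra.
From Stdlib Require Import Classical ClassicalEpsilon FunctionalExtensionality.
Import Order.TTheory GRing.Theory.
Set Implicit Arguments. Unset Strict Implicit. Unset Printing Implicit Defensive.

Lemma geq_trans' : transitive geq.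
Proof. move=> a b c h1 h2. exact: leq_trans h2 h1. Qed.

Lemma sorted_geq_cons x t : sorted geq (x :: t) -> all (fun y => y <= x) t.
Proof. move=> /= h. exact: (order_path_min geq_trans' h). Qed.

Lemma count_geq_sorted mu i k : sorted geq mu ->
  (k < count (fun j => i <= j) mu) = (k < size mu) && (i <= nth 0 mu k).
Proof.
elim: mu k => [|x t IH] k //= hs.
have hst : sorted geq t by move: hs; apply: path_sorted.
have ha := sorted_geq_cons hs.
case: (leqP i x) => hix.
  case: k => [|k] //=. by rewrite add1n ltnS IH.
have -> : count (fun j => i <= j) t = 0.
  apply/eqP; rewrite -leqn0 leqNgt -has_count; apply/hasP => -[y yt hy].
  have := allP ha y yt => hyx. by move: (leq_ltn_trans hy (leq_ltn_trans hyx hix)); rewrite ltnn.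
rewrite addn0.
case: k => [|k] /=; first by rewrite (leqNgt i) hix.
rewrite ltnS. case: (ltnP k (size t)) => hk //=.
have := allP ha (nth 0 t k) (mem_nth 0 hk) => h.
by rewrite (leqNgt i) (leq_ltn_trans h hix).
Qed.

Lemma count_iota_le m x : m <= x -> count (fun i => i <= m) (iota 1 x) = m.
Proof.
move=> hm. rewrite -(subnKC hm) iotaD count_cat.
rewrite (eq_in_count (a2 := predT)) ?count_predT ?size_iota; last first.
  by move=> i; rewrite mem_iota /= add1n ltnS => /andP[].
rewrite (eq_in_count (a2 := pred0)) ?count_pred0 ?addn0 //.
by move=> i; rewrite mem_iota /= => /andP[h _]; apply/negbTE; rewrite -ltnNge; rewrite add1n in h.
Qed.

Lemma is_part_cons x t : is_part (x :: t) -> [/\ 0 < x, is_part t & all (fun y => y <= x) t].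
Proof.
rewrite /is_part => /andP[hs /= /andP[hx ha]]; split => //.
  by rewrite ha (path_sorted hs).
exact: sorted_geq_cons.
Qed.

Lemma nth_le_head x t k : sorted geq (x :: t) -> nth 0 (x :: t) k <= x.
Proof.
move=> hs; case: k => [|k] //=. case: (ltnP k (size t)) => hk.
  exact: (allP (sorted_geq_cons hs)) _ (mem_nth 0 hk).
by rewrite nth_default.
Qed.

Lemma conj_partK mu : is_part mu -> conj_part (conj_part mu) = mu.
Proof.
case: mu => [|x t] // hp.
have [hx ht hall] := is_part_cons hp.
have hs : sorted geq (x :: t) by case/andP: hp.
have hpos : all (fun i => 0 < i) (x :: t) by case/andP: hp.
set mu := x :: t.
have hh : head 0 (conj_part mu) = size mu.
  rewrite /conj_part /=. case: x hx hp hs hpos hall mu => [|x'] //= _ _ _ hpos _ _.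
  by rewrite add1n; move: hpos; rewrite all_count => /eqP ->.
rewrite {1}/conj_part hh.
apply: (@eq_from_nth _ 0); first by rewrite size_map size_iota.
move=> k; rewrite size_map size_iota => hk.
rewrite (nth_map 0) ?size_iota // nth_iota // add1n.
rewrite /conj_part /= count_map.
rewrite (eq_count (a2 := fun i => i <= nth 0 mu k)); last first.
  move=> i /=. idtac.
  have := count_geq_sorted i k hs. by rewrite hk /= => <-.
by rewrite count_iota_le // nth_le_head.
Qed.

Lemma conj_part_part mu : is_part mu -> is_part (conj_part mu).
Proof.
case: mu => [|x t] // hp.
rewrite /is_part /conj_part /=; apply/andP; split.
  apply: homo_sorted; last exact: iota_sorted.
  move=> i j hij /=. apply: leq_add; last by apply: sub_count => y /= hy; exact: leq_trans hij hy.
  by case hjx: (j <= x) => //; rewrite (leq_trans hij hjx).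
rewrite all_map; apply/allP => i; rewrite mem_iota add1n ltnS => /andP[_ hi] /=.
by rewrite hi.
Qed.

Lemma shape_part s : is_part (Defs.shape s).
Proof.
rewrite /is_part /Defs.shape sort_sorted ?geq_total //=.
by rewrite all_sort filter_all.
Qed.

Lemma sumn_filter_pos s : sumn [seq i <- s | 0 < i] = sumn s.
Proof. by elim: s => //= x s IH; case: x => //= x; rewrite IH. Qed.

Lemma sumn_shape s : sumn (Defs.shape s) = sumn s.
Proof. by rewrite /Defs.shape (perm_sumn (permEl (perm_sort _ _))) sumn_filter_pos. Qed.

Lemma shape_id l : is_part l -> Defs.shape l = l.
Proof.
case/andP => hs hp. rewrite /Defs.shape (all_filterP hp).
exact: sorted_sort geq_trans' _ hs.
Qed.

Lemma shape_nseq0 n : Defs.shape (nseq n 0) = [::].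
Proof.
apply/nilP. by rewrite /nilp size_sort filter_nseq.
Qed.

Lemma sumn_part_size s : all (fun i => 0 < i) s -> size s <= sumn s.
Proof. elim: s => //= x s IH /andP[hx /IH h]. by rewrite -add1n leq_add. Qed.

Lemma mem_le_sumn s x : x \in s -> x <= sumn s.
Proof.
elim: s => //= y s IH; rewrite in_cons => /orP[/eqP->|/IH h]; first exact: leq_addr.
exact: leq_trans h (leq_addl _ _).
Qed.

Lemma rcons_nseq (T : Type) n (x : T) : rcons (nseq n x) x = nseq n.+1 x.
Proof. by elim: n => //= n ->. Qed.

Lemma sym_shape (K : fieldType) (f : seq nat -> K) s : Defs.is_sym f -> f s = f (Defs.shape s).
Proof.
case=> hr hp.
have hz : forall t n, f (t ++ nseq n 0) = f t.
  move=> t; elim=> [|n IH]; first by rewrite cats0.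
  by rewrite -rcons_nseq -rcons_cat hr.
set z := [seq i <- s | predC (fun i => 0 < i) i].
have hzn : z = nseq (size z) 0.
  apply/all_pred1P/allP => i; rewrite mem_filter /= -eqn0Ngt => /andP[]. by [].
rewrite -(hz (Defs.shape s) (size z)) -hzn; apply: hp.
have h2 : perm_eq ([seq i <- s | 0 < i] ++ z) s by apply/permPl; exact: perm_filterC.
rewrite perm_sym; apply: perm_trans h2; rewrite perm_cat2r /Defs.shape.
by rewrite perm_sort.
Qed.

Local Open Scope ring_scope.

Lemma sum_extend (K : fieldType) (u : nat -> K) N M :
  (forall n, (N <= n)%N -> u n = 0) -> (N <= M)%N ->
  \sum_(n < N) u n = \sum_(n < M) u n.
Proof.
move=> hu hNM. rewrite -!(big_mkord xpredT) (big_cat_nat (n := N) (p := M)) //=.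
rewrite [X in _ + X]big1_seq ?addr0 // => i /andP[_].
by rewrite mem_index_iota => /andP[h _]; apply: hu.
Qed.

Lemma fsumE (K : fieldType) (u : nat -> K) N :
  (forall n, (N <= n)%N -> u n = 0) -> fsum u = \sum_(n < N) u n.
Proof.
move=> hu. rewrite /fsum.
set M := epsilon _ _.
have hM : forall n, (M <= n)%N -> u n = 0.
  exact: (epsilon_spec (inhabits 0%N) (fun N => forall n, (N <= n)%N -> u n = 0) (ex_intro _ N hu)).
rewrite (sum_extend hM (leq_maxl M N)) (sum_extend hu (leq_maxr M N)).
by [].
Qed.

Lemma poly_zero (K : fieldType) (charK0 : [pchar K] =i pred0) (u : nat -> K) N :
  (forall n, (N <= n)%N -> u n = 0) ->
  (forall a : K, \sum_(n < N) a ^+ n * u n = 0) -> forall n, u n = 0.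
Proof.
move=> hu ha n.
case: (leqP N n) => hn; first exact: hu.
pose P := \poly_(i < N) u i.
have P0 : P = 0.
  apply/eqP; apply: contraT => nz.
  have hr : all (root P) [seq i%:R | i <- iota 0 N].
    apply/allP => x _. rewrite /root /P horner_poly.
    rewrite (eq_bigr (fun i : 'I_N => x ^+ i * u i)) ?ha // => i _; exact: mulrC.
  have hu' : uniq [seq (i%:R : K) | i <- iota 0 N].
    rewrite map_inj_uniq ?iota_uniq // => i j /eqP.
    move: charK0 => /pcharf0P hc.
    wlog hij : i j / (i <= j)%N.
      move=> H; case: (leqP i j) => h; first exact: H.
      rewrite eq_sym => e; symmetry; apply: H e; exact: ltnW.
    rewrite eq_sym -subr_eq0 -natrB // hc subn_eq0 => h. by apply/eqP; rewrite eqn_leq hij h.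
  have := max_poly_roots nz hr hu'.
  rewrite size_map size_iota => h.
  by have := leq_trans h (size_poly N u); rewrite ltnn.
have := congr1 (fun q : {poly K} => q`_n) P0.
by rewrite /= coef_poly hn coef0.
Qed.

Lemma symfun_lin (K : fieldType) (c : K) f g : symfun f -> symfun g ->
  symfun (fun t => c * f t + g t).
Proof.
move=> [[hr1 hp1] [D1 hD1]] [[hr2 hp2] [D2 hD2]]; split; first split.
- by move=> s; rewrite hr1 hr2.
- by move=> s t h; rewrite (hp1 _ _ h) (hp2 _ _ h).
exists (maxn D1 D2) => s hs.
rewrite hD1 ?hD2 ?mulr0 ?addr0 //.
  exact: leq_ltn_trans (leq_maxr _ _) hs.
exact: leq_ltn_trans (leq_maxl _ _) hs.
Qed.

Lemma fsum_ext (K : fieldType) (u v : nat -> K) : (forall n, u n = v n) -> fsum u = fsum v.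
Proof. by move=> h; congr fsum; apply: functional_extensionality. Qed.

Lemma symfun_Ea (K : fieldType) (a : K) f : symfun f -> symfun (Ea a f).
Proof.
move=> [[hr hp] [D hD]]; split; first split.
- move=> s; rewrite /Ea; apply: fsum_ext => n.
  by rewrite -rcons_cons hr.
- move=> s t h; rewrite /Ea; apply: fsum_ext => n.
  by rewrite (hp (n :: s) (n :: t)) // perm_cons.
exists D => s hs. rewrite /Ea (fsumE (N := 0%N)) ?big_ord0 // => n _.
rewrite hD ?mulr0 //=. exact: leq_trans hs (leq_addl _ _).
Qed.

Lemma vecs_le_zero l :
  [seq a <- vecs_le l | sumn a == 0%N] = [:: nseq (size l) 0%N].
Proof.
elim: l => [|x l IH] //=.
rewrite filter_cat filter_map.
rewrite (eq_filter (a2 := fun a => sumn a == 0%N)) // IH /=.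
have -> : [seq x0 <- [seq x1 :: y | x1 <- iota 1 x, y <- vecs_le l] | sumn x0 == 0%N] = [::].
  apply/nilP; rewrite /nilp size_filter -leqn0 leqNgt -has_count; apply/negP => /hasP [a /allpairsP [[i b] [/= hi hb ->]]].
  by move: hi; rewrite mem_iota /=; case: i.
by [].
Qed.

Lemma vsub_nseq0 l : vsub l (nseq (size l) 0%N) = l.
Proof. by elim: l => //= x l IH; rewrite /vsub /= subn0; congr cons. Qed.

Lemma dp_rhs_nil (K : fieldType) (p : seq nat -> seq nat -> K) l k :
  full_seq p -> is_part l -> dp_rhs p l k [::] = p [::] [::] * p l [:: k].
Proof.
move=> hfull hl; rewrite /dp_rhs (bigID (fun a => sumn a == 0%N)) /=.
rewrite [X in _ + X]big1 ?addr0; last first.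
  move=> a ha. have [_ hh _ _] := hfull _ (shape_part a).
  case: (eqVneq (p (Defs.shape a) [::]) 0) => [->|/hh]; first by rewrite mul0r.
  by rewrite sumn_shape /= => h; move: ha; rewrite -h.
by rewrite -big_filter vecs_le_zero big_seq1 shape_nseq0 vsub_nseq0 shape_id.
Qed.

Lemma revlex_irr a : ~ revlex a a.
Proof. by case=> i [h _]; rewrite ltnn in h. Qed.

Lemma revlex_trans a b c : revlex a b -> revlex b c -> revlex a c.
Proof.
case=> i [hi hi'] [j [hj hj']].
case: (ltngtP i j) => hij.
- exists j; split; first by rewrite hi'.
  move=> m hm; rewrite hi' ?hj' //; exact: ltn_trans hij hm.
- exists i; split; first by rewrite -hj'.
  move=> m hm; rewrite hi' ?hj' //; exact: ltn_trans hij hm.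
- subst j; exists i; split; first exact: ltn_trans hi hj.
  by move=> m hm; rewrite hi' ?hj'.
Qed.

Lemma exists_min (T : seq (seq nat)) : T != [::] ->
  exists2 mu, mu \in T & forall nu, nu \in T -> ~ revlex nu mu.
Proof.
elim: T => [|x T IH] // _.
case: (eqVneq T [::]) => [->|/IH [m hm hmin]].
  exists x; first exact: mem_head.
  by move=> nu; rewrite inE => /eqP ->; exact: revlex_irr.
case: (classic (revlex x m)) => hxm.
  exists x; first exact: mem_head.
  move=> nu; rewrite inE => /orP[/eqP ->|hnu]; first exact: revlex_irr.
  move=> h; exact: (hmin nu hnu (revlex_trans h hxm)).
exists m; first by rewrite inE hm orbT.
by move=> nu; rewrite inE => /orP[/eqP ->|hnu]; [exact: hxm | exact: hmin].
Qed.

Fixpoint allseqs (n m : nat) : seq (seq nat) :=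
  match n with
  | 0 => [:: [::]]
  | n'.+1 => [::] :: [seq i :: t | i <- iota 0 m.+1, t <- allseqs n' m]
  end.

Lemma mem_allseqs n m s : (size s <= n)%N -> all (fun i => i <= m)%N s -> s \in allseqs n m.
Proof.
elim: n s => [|n IH] [|x s] // hs /andP[hx ha].
change (x :: s \in [::] :: [seq i :: t | i <- iota 0 m.+1, t <- allseqs n m]).
rewrite in_cons; apply/orP; right.
apply: (allpairs_f (fun i t => i :: t)); first by rewrite mem_iota.
exact: IH.
Qed.

Definition upclosed (T : seq (seq nat)) :=
  forall mu nu, mu \in T -> is_part nu -> revlex mu nu -> sumn nu = sumn mu -> nu \in T.

Lemma upclosed_rem T mu : upclosed T -> (forall nu, nu \in T -> ~ revlex nu mu) ->
  upclosed [seq x <- T | x != mu].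
Proof.
move=> hu hmin nu w; rewrite !mem_filter => /andP[hnm hnT] hw hr hs.
rewrite (hu nu w) // andbT; apply/eqP => e; subst w.
exact: hmin nu hnT hr.
Qed.

Lemma size_rem' (T : seq (seq nat)) mu : mu \in T -> (size [seq x <- T | x != mu] < size T)%N.
Proof.
move=> hm. rewrite size_filter -(count_predC (pred1 mu) T) -addn1 addnC leq_add2r.
by rewrite -has_count has_pred1.
Qed.

Lemma F_zero (K : fieldType) (F : (seq nat -> K) -> nat -> seq nat -> K) :
  (forall (c : K) f g, symfun f -> symfun g ->
     forall k s, F (fun t => c * f t + g t) k s = c * F f k s + F g k s) ->
  forall k s, F (fun _ => 0) k s = 0.
Proof.
move=> hlin k s.
have hz : symfun (fun _ : seq nat => (0 : K)).
  by split; [split | exists 0%N].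
have := hlin 1 _ _ hz hz k s.
have -> : (fun t : seq nat => 1 * (0 : K) + 0) = (fun _ => 0).
  by apply: functional_extensionality => t; rewrite mulr0 addr0.
rewrite mul1r -{1}[F _ k s]addr0 => /addrI <-. by [].
Qed.

Lemma span_good (K : fieldType) (p : seq nat -> seq nat -> K)
  (F : (seq nat -> K) -> nat -> seq nat -> K) (c : K) :
  full_seq p ->
  (forall (c : K) f g, symfun f -> symfun g ->
     forall k s, F (fun t => c * f t + g t) k s = c * F f k s + F g k s) ->
  (forall l, is_part l -> forall k, F (p l) k [::] = c * p l [:: k]) ->
  forall n T f, (size T <= n)%N -> symfun f ->
  (forall mu, is_part mu -> f mu != 0 -> mu \in T) -> upclosed T ->
  forall k, F f k [::] = c * f [:: k].
Proof.
move=> hfull hlin hp.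
elim=> [|n IH] T f hT hf hsupp hup k.
- have e : f = (fun _ => 0).
    apply: functional_extensionality => s.
    rewrite (sym_shape s (proj1 hf)).
    case: (eqVneq (f (Defs.shape s)) 0) => // /(hsupp _ (shape_part s)).
    by case: T hT {hsupp hup}.
  by subst f; rewrite F_zero // mulr0.
case: (eqVneq T [::]) => [eT|nT].
  by apply: (IH T) => //; rewrite eT.
have [mu hmu hmin] := exists_min nT.
have hup' := upclosed_rem hup hmin.
have hsz : (size [seq x <- T | x != mu] <= n)%N.
  by rewrite -ltnS (leq_trans (size_rem' hmu) hT).
case: (boolP (is_part mu && (f mu != 0))) => [/andP[hpm hfm]|hno]; last first.
  apply: (IH _ f hsz hf _ hup') => nu hnu hfnu.
  rewrite mem_filter hsupp // andbT; apply/eqP => e; rewrite e in hnu hfnu.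
  by move: hno; rewrite hnu hfnu.
set l := conj_part mu.
have hl : is_part l by exact: conj_part_part.
have hcl : conj_part l = mu by exact: conj_partK.
have [hpl hhom htri hlead] := hfull l hl.
rewrite hcl in htri hlead.
set r := f mu / p l mu.
set f' := fun t => (- r) * p l t + f t.
have hf' : symfun f' by exact: symfun_lin.
have ef : f = (fun t => r * p l t + f' t).
  by apply: functional_extensionality => t; rewrite /f' addrA mulNr subrr add0r.
have hgood' := IH _ f' hsz hf'.
rewrite ef hlin // hp // hgood' //; last first.
  move=> nu hnu; rewrite /f' mem_filter.
  case: (eqVneq nu mu) => [->|hne] /=.
    by rewrite /r mulNr divfK // addNr eqxx.
  case: (eqVneq (f nu) 0) => [hf0|]; last by move=> h _; exact: hsupp.
  rewrite hf0 addr0 mulf_eq0 negb_or => /andP[_ hpnu].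
  have [e|hrl] := htri nu hnu hpnu; first by rewrite e eqxx in hne.
  apply: hup hmu hnu hrl _.
  by rewrite (hhom _ hpnu) (hhom _ hlead).
by rewrite [RHS]mulrDr mulrCA.
Qed.

Unset Implicit Arguments.

Theorem theorem3 (K : fieldType) (charK0 : [pchar K] =i pred0)
  (p : seq nat -> seq nat -> K) (F : (seq nat -> K) -> nat -> seq nat -> K) :
  full_seq p ->
  (* F maps Lambda to Lambda[y] *)
  (forall f, symfun f -> symfunY (F f)) ->
  (* F is K-linear *)
  (forall (c : K) f g, symfun f -> symfun g ->
     forall k s, F (fun t => c * f t + g t) k s = c * F f k s + F g k s) ->
  (* F is shift-invariant *)
  (forall (a : K) f, symfun f -> forall k s, EaY a (F f) k s = F (Ea a f) k s) ->
  (forall l, is_part l -> forall k s, F (p l) k s = dp_rhs p l k s) ->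
  exists c : K, c != 0 /\
    (forall f, symfun f -> forall k s, F f k s = c * Ey f k s) /\
    full_dps (fun l s => c^-1 * p l s).
Proof.
move=> hfull hY hlin hshift hdp.
set c := p [::] [::].
have hc0 : c != 0 by have [_ _ _ h] := hfull [::] isT; exact: h.
have hpgood : forall l, is_part l -> forall k, F (p l) k [::] = c * p l [:: k].
  by move=> l hl k; rewrite hdp // dp_rhs_nil.
have hbase : forall f, symfun f -> forall k, F f k [::] = c * f [:: k].
  move=> f hf k.
  have [_ [D hD]] := hf.
  set T0 := [seq mu <- allseqs D D | is_part mu && (sumn mu <= D)%N].
  have hmem : forall mu, is_part mu -> (sumn mu <= D)%N -> mu \in T0.
    move=> mu hmu hs; rewrite mem_filter hmu hs /=.
    apply: mem_allseqs.
      apply: leq_trans hs; apply: sumn_part_size; by case/andP: hmu.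
    by apply/allP => x hx; apply: leq_trans (mem_le_sumn hx) hs.
  apply: (span_good hfull hlin hpgood (leqnn (size T0)) hf).
    move=> mu hmu hfmu; apply: hmem => //; rewrite leqNgt; apply/negP => h.
    by move: hfmu; rewrite hD ?eqxx.
  move=> mu nu; rewrite mem_filter => /andP[/andP[_ hs] _] hnu _ e.
  by apply: hmem => //; rewrite e.
have hmain : forall s f, symfun f -> forall k, F f k s = c * f (k :: s).
  elim=> [|j0 s IH] f hf k; first exact: hbase.
  have [hsymY _] := hY f hf.
  have [_ [D1 hD1]] := hsymY k.
  have [[_ hperm] [D2 hD2]] := hf.
  set M := (maxn D1 D2).+1.
  pose u := fun j => F f k (j :: s) - c * f (j :: k :: s).
  have hu : forall n, (M <= n)%N -> u n = 0.
    move=> n hn; rewrite /u hD1 ?hD2 ?mulr0 ?subr0 //=.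
      apply: leq_trans (leq_addr _ _); apply: leq_trans hn; rewrite ltnS; exact: leq_maxr.
    apply: leq_trans (leq_addr _ _); apply: leq_trans hn; rewrite ltnS; exact: leq_maxl.
  have hz := poly_zero charK0 hu.
  have : u j0 = 0.
    apply: hz => a.
    have := hshift a f hf k s.
    rewrite /EaY IH; last exact: symfun_Ea.
    rewrite /Ea (fsumE (N := M)); last first.
      move=> n hn; rewrite hD1 ?mulr0 //=.
      apply: leq_trans (leq_addr _ _); apply: leq_trans hn; rewrite ltnS; exact: leq_maxl.
    rewrite (fsumE (N := M)); last first.
      move=> n hn; rewrite hD2 ?mulr0 //=.
      apply: leq_trans (leq_addr _ _); apply: leq_trans hn; rewrite ltnS; exact: leq_maxr.
    move=> e.
    rewrite (eq_bigr (fun n : 'I_M => a ^+ n * F f k ((n : nat) :: s) - c * (a ^+ n * f ((n : nat) :: k :: s)))); last first.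
      by move=> i _; rewrite /u mulrBr mulrCA.
    by rewrite sumrB -mulr_sumr e subrr.
  rewrite /u => /eqP; rewrite subr_eq0 => /eqP ->.
  congr (_ * _); apply: hperm.
  apply/permPl; exact: (perm_catCA [:: j0] [:: k] s).
exists c; split => //; split.
  by move=> f hf k s; rewrite /Ey hmain.
split.
  move=> l hl; have [hs hh ht hlead] := hfull l hl; split.
  - have e : (fun s => c^-1 * p l s) = (fun t => c^-1 * p l t + (fun _ : seq nat => (0 : K)) t).
      by apply: functional_extensionality => t; rewrite addr0.
    rewrite e; apply: symfun_lin => //.
    by split; [split | exists 0%N].
  - by move=> s; rewrite mulf_eq0 negb_or => /andP[_ /hh].
  - by move=> mu hmu; rewrite mulf_eq0 negb_or => /andP[_ /ht]; apply.
  - by rewrite mulf_neq0 ?invr_eq0.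
move=> l hl k s.
have [hs _ _ _] := hfull l hl.
have E := hdp l hl k s; rewrite hmain // in E.
rewrite /Ey /dp_rhs.
rewrite (eq_bigr (fun a => c^-1 * c^-1 * (p (Defs.shape a) s * p (Defs.shape (vsub l a)) [:: k]))); last first.
  by move=> a _; rewrite mulrACA.
rewrite -mulr_sumr -/(dp_rhs p l k s) -E.
by rewrite -mulrA mulKf.
Qed.
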